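(* If $(a,b)\in R_1\cup R_2$, then $J(a,b)\ge 3/17$.
   Context: For $(a,b)\in\mathbb R^2$ define $f_{a,b}(x_1,x_2)=[b+a(x_1+x_2)+x_1x_2](2-x_1-x_2)$. Let $X_1=\{(x_1,x_2):-1\le x_1\le 0,\ -x_1\le x_2\le 1\}$ and $X_2=\{(x_1,x_2):-1\le x_1\le0,\ x_1\le x_2\le -x_1\}$. Let $\chi_{a,b}=\max_{X_1\cup X_2}f_{a,b}$, $m_{a,b}=\min_{X_1\cup X_2}f_{a,b}$, $R=\{(a,b)\in\mathbb R^2: m_{a,b}>0\}$, and for $(a,b)\in R$ let $J(a,b)=\frac{\chi_{a,b}-m_{a,b}}{\chi_{a,b}+m_{a,b}}$. Whenever $(1-2a)^2\ge3(b-2a)$ let $t_-=\frac{2a-1-\sqrt{(1-2a)^2-3(b-2a)}}{3/2}$. Define $R_1=\{(a,b)\in R:(1-2a)^2<3(b-2a)\}$ and $R_2=\{(a,b)\in R:(1-2a)^2\ge3(b-2a)>0,\ t_-\notin[0,2]\}$. *)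

(* Defs.v *)
From Stdlib Require Import Reals Lra.
Open Scope R_scope.

Definition f (a b x1 x2 : R) : R :=
  (b + a * (x1 + x2) + x1 * x2) * (2 - x1 - x2).

Definition X1 (x1 x2 : R) : Prop := -1 <= x1 <= 0 /\ - x1 <= x2 <= 1.
Definition X2 (x1 x2 : R) : Prop := -1 <= x1 <= 0 /\ x1 <= x2 <= - x1.
Definition X (x1 x2 : R) : Prop := X1 x1 x2 \/ X2 x1 x2.

Definition is_max_f (a b M : R) : Prop :=
  (exists x1 x2, X x1 x2 /\ f a b x1 x2 = M) /\
  (forall x1 x2, X x1 x2 -> f a b x1 x2 <= M).

Definition is_min_f (a b m : R) : Prop :=
  (exists x1 x2, X x1 x2 /\ f a b x1 x2 = m) /\
  (forall x1 x2, X x1 x2 -> m <= f a b x1 x2).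

Definition tminus (a b : R) : R :=
  (2 * a - 1 - sqrt ((1 - 2 * a) ^ 2 - 3 * (b - 2 * a))) / (3 / 2).

(* membership conditions of R1 and R2, beyond (a,b) ∈ R *)
Definition R1_cond (a b : R) : Prop := (1 - 2 * a) ^ 2 < 3 * (b - 2 * a).
Definition R2_cond (a b : R) : Prop :=
  (1 - 2 * a) ^ 2 >= 3 * (b - 2 * a) /\ 3 * (b - 2 * a) > 0 /\
  ~ (0 <= tminus a b <= 2).

(* Main.v *)
Require Import Defs.
From Stdlib Require Import Reals.
From Stdlib Require Import Lra Psatz.
Open Scope R_scope.

Theorem propositionA3 (a b chi m : R) :
  is_max_f a b chi -> is_min_f a b m ->
  m > 0 ->
  (R1_cond a b \/ R2_cond a b) ->
  (chi - m) / (chi + m) >= 3 / 17.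
Proof.
  intros [[y1 [y2 [Hy Hfy]]] Hmax] [_ Hmin] Hm HR.
  assert (XA : X 0 0) by (right; unfold X2; lra).
  assert (XB : X (-1) 1) by (left; unfold X1; lra).
  assert (XC : X 0 1) by (left; unfold X1; lra).
  assert (XE : X (-1) 0) by (right; unfold X2; lra).
  pose proof (Hmax _ _ XA) as MA. pose proof (Hmin _ _ XA) as mA.
  pose proof (Hmax _ _ XB) as MB. pose proof (Hmin _ _ XB) as mB.
  pose proof (Hmax _ _ XC) as MC. pose proof (Hmin _ _ XC) as mC.
  pose proof (Hmax _ _ XE) as ME. pose proof (Hmin _ _ XE) as mE.
  unfold Defs.f in *.
  replace ((b + a * (0 + 0) + 0 * 0) * (2 - 0 - 0)) with (2*b) in MA, mA by ring.
  replace ((b + a * (-1 + 1) + -1 * 1) * (2 - -1 - 1)) with (2*b-2) in MB, mB by ring.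
  replace ((b + a * (0 + 1) + 0 * 1) * (2 - 0 - 1)) with (b+a) in MC, mC by ring.
  replace ((b + a * (-1 + 0) + -1 * 0) * (2 - -1 - 0)) with (3*(b-a)) in ME, mE by ring.
  assert (Hkey : 7 * chi >= 10 * m).
  { destruct (Rle_dec b (10/3)). { lra. }
    destruct (Rle_dec a (2/5 * b)). { lra. }
    destruct (Rle_dec (8/15 * b) a). { lra. }
    exfalso. destruct HR as [H1 | [H1 [H2 H3]]].
    - unfold R1_cond in H1. nra.
    - unfold tminus in H3.
      set (D := (1 - 2 * a) ^ 2 - 3 * (b - 2 * a)) in *.
      assert (HD : 0 <= D) by (unfold D; lra).
      pose proof (sqrt_pos D) as Hq.
      pose proof (sqrt_sqrt D HD) as Hqq.
      set (q := sqrt D) in *.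
      apply Rnot_le_lt in n.
      destruct (Rle_dec 0 ((2 * a - 1 - q) / (3 / 2))) as [h0|h0].
      + destruct (Rle_dec ((2 * a - 1 - q) / (3 / 2)) 2) as [h2|h2].
        * apply H3; split; assumption.
        * apply Rnot_le_lt in h2.
          assert (q < 2 * a - 4) by lra.
          unfold D in Hqq. nra.
      + apply Rnot_le_lt in h0.
        assert (2 * a - 1 < q) by lra.
        unfold D in Hqq. nra. }
  assert (Hchi : chi >= m) by (specialize (Hmin _ _ Hy); lra).
  apply Rle_ge. apply Rmult_le_reg_r with (chi + m); [lra|].
  unfold Rdiv. rewrite (Rmult_assoc (chi - m)), Rinv_l by lra. lra.
Qed.
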